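(* Fix a prime $p$ and $n\in\mathbb{N}$, and let $\mathbb{L}_{p,n}$ denote the restriction of $\mathbb{L}_p(r)=|r|+\|r\|_p$ to the subgroup $\frac{1}{p^n}\mathbb{Z}$ of $\mathbb{Z}[\tfrac1p]$. Then $\frac1{p^n}\mathbb{Z}$ has the property of bounded $p$-dilation with respect to $\mathbb{L}_{p,n}$. In particular, $\mathbb{L}_{p,n}$ is of bounded doubling with constant $C_{\mathbb{L}_{p,n}}=4p^8$.
   Context: $\mathbb{Z}[\tfrac1p]=\{a/p^k:a\in\mathbb{Z},k\in\mathbb{N}\}$; $\|\cdot\|_p$ is the $p$-adic norm ($\|0\|_p=0$, $\|r\|_p=p^{-n}$ if $r=ap^n/b$ with $a,b$ coprime to $p$ and to each other). For a length function $\mathbb{L}$ on a discrete group $\Gamma$ (i.e. $\mathbb{L}(\gamma)=0\iff\gamma=e$, symmetric, subadditive), $B_{\mathbb{L}}(R)=\{\gamma:\mathbb{L}(\gamma)\le R\}$; $\mathbb{L}$ is proper if all $B_{\mathbb{L}}(R)$ are finite; $\Gamma$ has bounded $\mathbf t$-dilation w.r.t. $\mathbb{L}$ ($\mathbf t>1$) if $\mathbb{L}$ is proper and $|B_{\mathbb{L}}(\mathbf tR)|\le K|B_{\mathbb{L}}(R)|$ for some $K<\infty$ and all $R\ge1$; $\mathbb{L}$ is of bounded doubling with constant $C$ if it is proper and $|B_{\mathbb{L}}(2R)|\le C|B_{\mathbb{L}}(R)|$ for all $R\ge1$. *)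

(* Defs.v *)
From HB Require Import structures.
From mathcomp Require Import all_boot all_order all_algebra.
From mathcomp Require Import all_classical all_reals.
From mathcomp Require Import finmap.
Set Implicit Arguments. Unset Strict Implicit. Unset Printing Implicit Defensive.
Import Order.TTheory GRing.Theory Num.Theory.
Local Open Scope ring_scope.
Local Open Scope classical_set_scope.
Local Open Scope fset_scope.

(* p-adic norm on rationals: ||0||_p = 0, ||a p^k / b||_p = p^(-k)
   (a, b coprime to p). For r = numq r / denq r in lowest terms,
   k = v_p(numq r) - v_p(denq r). *)
Definition padic_norm (p : nat) (r : rat) : rat :=
  if r == 0 then 0
  else (p%:R ^+ logn p (absz (denq r))) / (p%:R ^+ logn p (absz (numq r))).

Definition Lp (p : nat) (r : rat) : rat := `|r| + padic_norm p r.

Definition in_pnZ (p n : nat) (r : rat) : bool := (r * (p ^ n)%:R) \is a Num.int.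
Definition pnZ (p n : nat) := {r : rat | in_pnZ p n r}.

Definition Lpn (R : realType) (p n : nat) (g : pnZ p n) : R := ratr (Lp p (val g)).

Definition ball_L {T} {R : realType} (L : T -> R) (r : R) : set T := [set g | L g <= r].
Definition proper_L {T} {R : realType} (L : T -> R) : Prop :=
  forall r : R, finite_set (ball_L L r).
Definition ball_card {T : choiceType} {R : realType} (L : T -> R) (r : R) : nat :=
  #|` fset_set (ball_L L r)|%fset.

Definition bounded_dilation {T : choiceType} {R : realType} (t : R) (L : T -> R) : Prop :=
  proper_L L /\ exists K : R, forall r : R, 1 <= r ->
    (ball_card L (t * r))%:R <= K * (ball_card L r)%:R.

Definition bounded_doubling {T : choiceType} {R : realType} (C : R) (L : T -> R) : Prop :=
  proper_L L /\ forall r : R, 1 <= r ->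
    (ball_card L (2 * r))%:R <= C * (ball_card L r)%:R.

(* Main.v *)
Require Import Defs.
From HB Require Import structures.
From mathcomp Require Import all_boot all_order all_algebra.
From mathcomp Require Import all_classical all_reals.
From mathcomp Require Import finmap.
From mathcomp Require Import zify ring lra.
Import Order.TTheory GRing.Theory Num.Theory.
Local Open Scope ring_scope.

Lemma padic_frac (p : nat) (x : int) (y : nat) : prime p -> x != 0 -> (0 < y)%N ->
  padic_norm p (x%:~R / y%:R) = p%:R ^+ logn p y / p%:R ^+ logn p `|x|.
Proof.
move=> hp hx hy.
have p0 : (p%:R : rat) != 0 by rewrite pnatr_eq0 -lt0n prime_gt0.
have y0 : (y%:R : rat) != 0 by rewrite pnatr_eq0 -lt0n.
set r := x%:~R / y%:R.
have r0 : r != 0 by rewrite /r mulf_neq0 ?invr_eq0 // intr_eq0.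
rewrite /padic_norm (negbTE r0).
have e : numq r * y%:Z = x * denq r.
  apply: (@intr_inj rat); rewrite !intrM.
  have := divq_num_den r; rewrite {2}/r => /eqP.
  have d0 : ((denq r)%:~R : rat) != 0 by rewrite intr_eq0 denq_neq0.
  rewrite eqr_div // => /eqP ->.
  by rewrite mulrC.
have nz : numq r != 0 by rewrite numq_eq0.
have e2 : (logn p `|numq r| + logn p y = logn p `|x| + logn p `|denq r|)%N.
  rewrite -!lognM ?absz_gt0 ?denq_neq0 //.
  by have := congr1 absz e; rewrite !abszM absz_nat => ->.
apply/eqP; rewrite eqr_div ?expf_neq0 // -!exprD; apply/eqP; congr (_ ^+ _).
by rewrite addnC -e2 addnC.
Qed.

Definition Lint (R : realType) (p n : nat) (a : int) : R :=
  `|a|%:~R / (p%:R ^+ n) + (if a == 0 then 0 else p%:R ^+ n / p%:R ^+ logn p `|a|).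

Lemma enc_proof p n (a : int) : in_pnZ p n (a%:~R / (p ^ n)%:R).
Proof.
rewrite /in_pnZ; have [->|h] := eqVneq ((p ^ n)%:R : rat) 0.
  by rewrite mulr0 rpred0.
by rewrite divfK // intr_int.
Qed.

Definition enc p n (a : int) : pnZ p n := exist (in_pnZ p n) _ (enc_proof p n a).

Lemma decode p n (g : pnZ p n) : prime p -> exists a : int, val g = a%:~R / (p ^ n)%:R.
Proof.
move=> hp; case: g => r /= /intrP [a ha]; exists a.
have h : ((p ^ n)%:R : rat) != 0 by rewrite pnatr_eq0 expn_eq0 negb_and -lt0n prime_gt0.
by rewrite -ha mulfK.
Qed.

Lemma Lpn_val (R : realType) p n (g : pnZ p n) (a : int) : prime p ->
  val g = a%:~R / (p ^ n)%:R -> Lpn R g = Lint R p n a.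
Proof.
move=> hp hg; rewrite /Lpn /Lp /Lint hg.
have [->|a0] := eqVneq a 0.
  by rewrite /padic_norm mul0r eqxx normr0 addr0 rmorph0 normr0 mul0r addr0.
rewrite padic_frac // ?expn_gt0 ?prime_gt0 // pfactorK //.
rewrite rmorphD /= ratr_norm fmorph_div /= ratr_int ratr_nat natrX.
rewrite fmorph_div /= !rmorphXn /= ratr_nat normrM.
rewrite [X in _ * X]ger0_norm ?invr_ge0 ?exprn_ge0 ?ler0n //.
by rewrite -intr_norm.
Qed.

Lemma Lint_abs (R : realType) p n a : prime p -> `|a|%:~R / (p%:R : R) ^+ n <= Lint R p n a.
Proof.
move=> hp; rewrite /Lint lerDl; case: ifP => // _.
by rewrite divr_ge0 // exprn_ge0 // ler0n.
Qed.

Lemma Lint_pad (R : realType) p n a : prime p -> a != 0 ->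
  (p%:R : R) ^+ n / p%:R ^+ logn p `|a| <= Lint R p n a.
Proof.
move=> hp a0; rewrite /Lint (negbTE a0) lerDr.
by rewrite divr_ge0 // ?exprn_ge0 ?ler0n // -intr_norm ler0n.
Qed.

Lemma proper_Lpn (R : realType) p n : prime p -> proper_L (@Lpn R p n).
Proof.
move=> hp r.
have P0 : 0 < (p%:R : R) by rewrite ltr0n prime_gt0.
set N := Num.Def.archi_bound (`|r| * (p%:R : R) ^+ n).
have hN : `|r| * (p%:R : R) ^+ n < N%:R.
  by apply: archi_boundP; rewrite mulr_ge0 // exprn_ge0 // ltW.
pose FS := seq_fset tt [seq enc p n (i%:Z - N%:Z) | i <- iota 0 (2 * N).+1].
apply: (finite_subfset FS) => g /= hg.
have [a ha] := @decode p n g hp.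
have hL : Lint R p n a <= r by rewrite -(@Lpn_val R p n g a hp ha).
have ha1 : (`|a|%:R : R) < N%:R.
  apply: le_lt_trans hN; rewrite -ler_pdivrMr ?exprn_gt0 //.
  rewrite natr_absz; apply: le_trans (@Lint_abs R p n a hp) _.
  by apply: le_trans hL _; apply: ler_norm.
rewrite ltr_nat in ha1.
have h0 : (0 <= a + N%:Z)%R by lia.
rewrite seq_fsetE; apply/mapP; exists (absz (a + N%:Z)%R).
  rewrite mem_iota add0n ltnS; lia.
apply: val_inj; rewrite /= ha; congr (_%:~R / _).
by rewrite gez0_abs // addrK.
Qed.

Lemma card_imfset2_le (T1 T2 K : choiceType) (f : T1 -> T2 -> K)
  (A : {fset T1}) (B : {fset T2}) :
  (#|` [fset f x y | x in A, y in B]%fset| <= #|` A| * #|` B|)%N.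
Proof.
rewrite Imfset.imfset2E /= size_seq_fset.
apply: leq_trans (size_undup _) _.
by rewrite size_allpairs.
Qed.

Lemma qb (b q w d K : int) : b = q * d + w -> 0 <= w -> w < d -> `|b| < K * d -> `|q| <= K.
Proof. move=> h1 h2 h3 h4.
have [hq|hq] := lerP 0 q.
- rewrite ger0_norm //. rewrite ger0_norm in h4; last by nia. nia.
- rewrite ltr0_norm //. rewrite ler0_norm in h4; last by nia. nia.
Qed.

Lemma qb' (b d : int) (K : nat) : 0 < d -> `|b| < K%:Z * d -> (`|(b %/ d)%Z| <= K)%N.
Proof.
move=> d0 h.
have h1 := divz_eq b d.
have h2 := modz_ge0 b (lt0r_neq0 d0).
have h3 := ltz_pmod b d0.
rewrite -lez_nat abszE.
move: h1 h2 h3 h; set q := (b %/ d)%Z; set w := (b %% d)%Z; exact: qb.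
Qed.

Lemma qbound (R : realType) p n m (S : R) (a : int) : prime p ->
  S / 2 < (p%:R : R) ^+ m.+1 -> Lint R p n a <= p%:R * S ->
  (`|(((p ^ 2)%:Z * a) %/ (p ^ m * p ^ n)%:Z)%Z| <= 2 * p ^ 4)%N.
Proof.
move=> hp hm hL.
have P0 : 0 < (p%:R : R) by rewrite ltr0n prime_gt0.
apply: qb'; first by rewrite ltz_nat muln_gt0 !expn_gt0 prime_gt0.
rewrite -(ltr_int R) intr_norm !intrM normrM -!pmulrn !natrM !natrX.
rewrite ger0_norm ?mulr_ge0 ?ler0n // -intr_norm.
have hA := @Lint_abs R p n a hp.
set X := (p%:R : R) ^+ m in hm *. set Y := (p%:R : R) ^+ n in hA *.
have Y0 : 0 < Y by rewrite exprn_gt0.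
have X0 : 0 < X by rewrite exprn_gt0.
have hA' : `|a|%:~R <= p%:R * S * Y.
  by rewrite -ler_pdivrMr //; apply: le_trans hA hL.
move: hm; rewrite exprS -/X => hm.
have hB : S < 2 * (p%:R * X) by lra.
set Ab := `|a|%:~R in hA' *.
set P := (p%:R : R) in hA' hB P0 *.
have h1 : P * P * Ab <= P * P * (P * S * Y).
  by rewrite ler_pM2l // mulr_gt0.
apply: le_lt_trans h1 _.
have -> : (2 * (P * (P * (P * P))) * (X * Y)) = (P * P * P * Y) * (2 * (P * X)) by ring.
have -> : P * P * (P * S * Y) = (P * P * P * Y) * S by ring.
by rewrite ltr_pM2l // !mulr_gt0.
Qed.

Lemma pdiv_mono (R : realType) p n k v : prime p -> (k <= v)%N ->
  (p%:R : R) ^+ n / p%:R ^+ v <= (p%:R : R) ^+ n / p%:R ^+ k.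
Proof.
move=> hp hkv.
have P1 : 1 < (p%:R : R) by rewrite ltr1n prime_gt1.
have P0 : 0 < (p%:R : R) by lra.
rewrite ler_pM2l ?exprn_gt0 // lef_pV2 ?posrE ?exprn_gt0 //.
by rewrite ler_eXn2l.
Qed.

Lemma wbound (R : realType) p n m (S : R) (a : int) : prime p -> 1 <= S ->
  ((p%:R : R) ^+ m <= S / 2 \/ (m = 0%N /\ S < 2)) ->
  Lint R p n a <= p%:R * S ->
  Lint R p n (((p ^ 2)%:Z * a) %% (p ^ m * p ^ n)%:Z)%Z <= S.
Proof.
move=> hp S1 hm hL.
have P2 : 2 <= (p%:R : R) by rewrite ler_nat prime_gt1.
have P0 : 0 < (p%:R : R) by lra.
set d := (p ^ m * p ^ n)%N.
have d0 : (0 < d%:Z) by rewrite ltz_nat muln_gt0 !expn_gt0 prime_gt0.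
set b := ((p ^ 2)%:Z * a).
set w := (b %% d)%Z.
set q := (b %/ d)%Z.
change (Lint R p n w <= S).
have hb : b = q * d%:Z + w := divz_eq b d.
have hw0 : 0 <= w := modz_ge0 b (lt0r_neq0 d0).
have hwd : w < d%:Z := ltz_pmod b d0.
have [->|w0] := eqVneq w 0.
  by rewrite /Lint normr0 mul0r eqxx addr0; lra.
have a0 : a != 0.
  by apply: contraNneq w0 => a0; rewrite /w /b a0 mulr0 mod0z.
set v := logn p `|a|.
set k0 := minn (v + 2) (m + n).
have hk0 : (p ^ k0 %| `|w|)%N.
  have : ((p ^ k0)%:Z %| w)%Z.
    have -> : w = b - q * d%:Z by rewrite hb addrAC subrr add0r.
    apply: rpredB.
      rewrite dvdzE absz_nat /b abszM absz_nat.
      apply: dvdn_trans (dvdn_exp2l p (geq_minl _ _)) _.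
      by rewrite expnD mulnC dvdn_mul // pfactor_dvdnn.
    rewrite dvdzE absz_nat abszM absz_nat.
    apply: dvdn_mull.
    by apply: dvdn_trans (dvdn_exp2l p (geq_minr _ _)) _; rewrite /d expnD.
  by rewrite dvdzE absz_nat.
have w1 : (0 < `|w|)%N by rewrite absz_gt0.
have hkv : (k0 <= logn p `|w|)%N by rewrite -pfactor_dvdn.
have hpad := @pdiv_mono R p n _ _ hp hkv.
have hwR : (w%:~R : R) < (p%:R : R) ^+ m * (p%:R) ^+ n.
  by move: hwd; rewrite -(ltr_int R) -pmulrn /d natrM !natrX.
have hA := @Lint_pad R p n a hp a0.
rewrite -/v in hA.
have Xn0 : 0 < (p%:R : R) ^+ n by rewrite exprn_gt0.
rewrite /Lint (negbTE w0) (ger0_norm hw0).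
case: hm => [hm|[m0 S2]].
- have hS : 2 <= S.
    have : 1 <= (p%:R : R) ^+ m by apply: exprn_ege1; lra.
    lra.
  have h1 : (w%:~R : R) / p%:R ^+ n <= S / 2.
    rewrite ler_pdivrMr //; apply: ltW; apply: lt_le_trans hwR _.
    by rewrite ler_pM2r.
  suff h2 : (p%:R : R) ^+ n / p%:R ^+ k0 <= S / 2 by lra.
  rewrite /k0; case: (leqP (v + 2) (m + n)) => hc.
  + rewrite exprD invfM mulrA ler_pdivrMr ?exprn_gt0 //.
    apply: le_trans (le_trans hA hL) _.
    have hPS : 0 <= (p%:R : R) * S by apply: mulr_ge0; lra.
    rewrite expr2; nra.
  + rewrite exprD invfM mulrCA divff ?gt_eqF ?exprn_gt0 //.
    rewrite mulr1; apply: le_trans _ (_ : 1 <= S / 2); last by lra.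
    by rewrite invf_le1 ?exprn_gt0 //; apply: exprn_ege1; lra.
- exfalso.
  have hv : (n < v + 2)%N.
    rewrite -(ltr_eXn2l (_ : 1 < (p%:R : R))); last by lra.
    have : (p%:R : R) ^+ n / p%:R ^+ v < p%:R ^+ 2.
      apply: le_lt_trans (le_trans hA hL) _; rewrite expr2; nra.
    by rewrite ltr_pdivrMr ?exprn_gt0 // -exprD addnC.
  have : k0 = n by rewrite /k0 m0 add0n; apply/minn_idPr; apply: ltnW.
  move=> k0n; rewrite k0n in hk0.
  have := dvdn_leq w1 hk0.
  have : (`|w| < p ^ n)%N.
    by rewrite -ltz_nat gez0_abs //; move: hwd; rewrite /d m0 expn0 mul1n.
  lia.
Qed.

Lemma choose_m (R : realType) p (S : R) : prime p -> 1 <= S ->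
  exists m, S / 2 < (p%:R : R) ^+ m.+1 /\
    ((p%:R : R) ^+ m <= S / 2 \/ (m = 0%N /\ S < 2)).
Proof.
move=> hp S1.
have P2 : 2 <= (p%:R : R) by rewrite ler_nat prime_gt1.
have [S2|S2] := ltP S 2.
  by exists 0%N; split; [rewrite expr1; lra | right].
have ex : exists k, (p%:R : R) ^+ k <= S / 2 by exists 0%N; rewrite expr0; lra.
have ub : forall k, (p%:R : R) ^+ k <= S / 2 -> (k <= Num.Def.archi_bound (S / 2))%N.
  move=> k hk; rewrite leqNgt; apply/negP => hlt.
  have := upper_nthrootP (ltnW hlt).
  have : (2 : R) ^+ k <= (p%:R) ^+ k by apply: lerXn2r; rewrite ?nnegrE //; lra.
  lra.
have [m hm hmax] := ex_maxnP ex ub.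
exists m; split; last by left.
rewrite ltNge; apply/negP => h.
by have := hmax _ h; rewrite ltnn.
Qed.

Lemma dil (R : realType) p n (S : R) : prime p -> 1 <= S ->
  (ball_card (@Lpn R p n) (p%:R * S) <= ball_card (@Lpn R p n) S * (4 * p ^ 4).+1)%N.
Proof.
move=> hp S1.
have [m [hm1 hm2]] := @choose_m R p S hp S1.
have fin := @proper_Lpn R p n hp.
pose g0 := enc p n 0.
pose h (w : pnZ p n) (q : int) : pnZ p n :=
  insubd g0 ((val w + q%:~R * (p ^ m)%:R) / (p ^ 2)%:R).
pose F := seq_fset tt [seq (i%:Z - (2 * p ^ 4)%:Z) | i <- iota 0 (4 * p ^ 4).+1].
rewrite /ball_card.
apply: (@leq_trans #|` [fset h w q | w in fset_set (ball_L (@Lpn R p n) S), q in F]%fset|).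
  apply: fsubset_leq_card; apply/fsubsetP => g.
  rewrite in_fset_set ?in_setE /ball_L /=; last exact: fin.
  move=> hg.
  have [a ha] := @decode p n g hp.
  have hL : Lint R p n a <= p%:R * S by rewrite -(@Lpn_val R p n g a hp ha).
  set d := (p ^ m * p ^ n)%N.
  set b := ((p ^ 2)%:Z * a).
  set w := (b %% d)%Z.
  set q := (b %/ d)%Z.
  have hb : b = q * d%:Z + w := divz_eq b d.
  apply/imfset2P; exists (enc p n w).
    rewrite in_fset_set ?in_setE /ball_L /=; last exact: fin.
    by rewrite (@Lpn_val R p n _ w hp) //; apply: wbound.
  exists q.
    have hq := @qbound R p n m S a hp hm1 hL.
    have hq2 : (absz q <= 2 * p ^ 4)%N := hq.
    rewrite seq_fsetE; apply/mapP; exists (absz (q + (2 * p ^ 4)%:Z)%R).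
      rewrite mem_iota add0n ltnS; clear -hq2; lia.
    clear -hq2; lia.
  have e : (val (enc p n w) + q%:~R * (p ^ m)%:R) / (p ^ 2)%:R = val g.
    have hbq : ((p ^ 2)%:R : rat) * a%:~R = q%:~R * ((p ^ m)%:R * (p ^ n)%:R) + w%:~R.
      have := congr1 (fun z : int => (z%:~R : rat)) hb.
      rewrite /b /= intrD !intrM => e0; apply: etrans e0 _; congr (_ * _ + _); exact: natrM.
    have pn0 : ((p ^ n)%:R : rat) != 0 by rewrite pnatr_eq0 expn_eq0 negb_and -lt0n prime_gt0.
    have p20 : ((p ^ 2)%:R : rat) != 0 by rewrite pnatr_eq0 expn_eq0 negb_and -lt0n prime_gt0.
    have ha' : (a%:~R : rat) = (q%:~R * ((p ^ m)%:R * (p ^ n)%:R) + w%:~R) / (p ^ 2)%:R.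
      by rewrite -hbq [_ * a%:~R]mulrC mulfK.
    rewrite ha /= ha'; field.
    by rewrite pn0 /= pnatr_eq0 -lt0n prime_gt0.
  rewrite /h; apply: val_inj; rewrite /= -e insubdK //.
  by move: (valP g); rewrite -e.
apply: leq_trans (card_imfset2_le _ _ _ h (fset_set (ball_L (@Lpn R p n) S)) F) _.
rewrite leq_mul2l; apply/orP; right.
rewrite size_seq_fset; apply: leq_trans (size_undup _) _.
by rewrite size_map size_iota.
Qed.

Lemma card_mono (R : realType) p n (r1 r2 : R) : prime p -> r1 <= r2 ->
  (ball_card (@Lpn R p n) r1 <= ball_card (@Lpn R p n) r2)%N.
Proof.
move=> hp h; have fin := @proper_Lpn R p n hp.
apply: fsubset_leq_card; rewrite -fset_set_sub //.
by move=> g /= hg; apply: le_trans hg h.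
Qed.

Lemma final_ineq (R : realType) p (x y : nat) : prime p ->
  (x <= y * (4 * p ^ 4).+1)%N -> (x%:R : R) <= 4 * (p%:R : R) ^+ 8 * y%:R.
Proof.
move=> hp h.
have p2 := prime_gt1 hp.
have h2 : ((4 * p ^ 4).+1 <= 4 * p ^ 8)%N.
  have h16 : (2 ^ 4 <= p ^ 4)%N by rewrite leq_exp2r.
  have -> : (p ^ 8 = p ^ 4 * p ^ 4)%N by rewrite -expnD.
  move: h16; rewrite (_ : 2 ^ 4 = 16)%N //.
  move: (p ^ 4)%N => t ht; nia.
have h3 : (x <= 4 * p ^ 8 * y)%N by rewrite mulnC; apply: leq_trans h _; rewrite leq_mul2l h2 orbT.
by rewrite -natrX -[4]/(4%:R) -!natrM ler_nat.
Qed.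

Theorem lemma3p16 (R : realType) (p n : nat) (hp : prime p) :
  bounded_dilation (p%:R : R) (@Lpn R p n) /\
  bounded_doubling (4 * (p%:R : R) ^+ 8) (@Lpn R p n).
Proof.
have fin := @proper_Lpn R p n hp.
split.
  split => //; exists (4 * (p%:R : R) ^+ 8) => r r1.
  by apply: final_ineq => //; apply: (@dil R p n r hp r1).
split => // r r1.
apply: final_ineq => //; apply: leq_trans _ (@dil R p n r hp r1).
apply: card_mono => //; rewrite ler_pM2r ?ler_nat ?prime_gt1 //.
by apply: lt_le_trans r1.
Qed.
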